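(* Let $n\ge5$, $x\in\mathcal{H}_n$ and $p_0<p_1<\dots<p_{n-4}$. Then any two chain covers for $x$ are connected to each other in $\tilde{\mathbb{H}}_1(x,p)$, i.e. the corresponding vertices of the tropical curve $\tilde{\mathbb{H}}_1(x,p)$ can be joined by a sequence of edges of $\tilde{\mathbb{H}}_1(x,p)$.
   Context: $\mathcal{H}_n:=\{x\in\mathbb{Z}^n:\sum_i x_i=0\}\setminus\{0\}$. $\tilde{\mathbb{H}}_1(x,p)$ is the one-dimensional marked tropical Hurwitz cycle, $\tilde{\mathbb{H}}_1(x,p)=\prod_{i=0}^{n-4}(\Psi_i\cdot\mathrm{ev}_i^*(p_i))\cdot\mathcal{M}_{0,n-3}(\mathbb{R},x)$, where $\mathcal{M}_{0,m}(\mathbb{R},x)=\mathcal{M}_{0,n+m}\times\mathbb{R}$ is the space of tropical stable maps of rational $n$-marked curves with $m$ additional contracted leaves $l_0,\dots,l_{m-1}$ to $\mathbb{R}$ with slopes $x_i$ on leaf $i$, $\mathrm{ev}_i$ is evaluation at $l_i$, $\Psi_i$ is the Psi class of $l_i$ (curves where $l_i$ sits at a vertex of valence $\ge4$) times $\mathbb{R}$, and $\mathrm{ev}_i^*(p_i)$ is the pull-back of $t\mapsto\max\{t,p_i\}$. Orientation/weights: for an $n$-marked rational tropical curve, leaf $i$ has weight $|x_i|$ and points away from its vertex iff $x_i>0$; a bounded edge inducing the split $I\mid I^c$ has weight $|\sum_{i\in I}x_i|$ and points towards $I$ iff $\sum_{i\in I}x_i>0$. A vertex type cover is a combinatorial type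 of an $n$-marked rational curve with exactly one four-valent vertex and all other vertices trivalent, together with a bijective labeling of its $n-3$ vertices by $p_0,\dots,p_{n-4}$, such that every bounded edge has nonzero weight and is oriented from the vertex with the smaller label to the vertex with the larger label; these are exactly the vertices of $\tilde{\mathbb{H}}_1(x,p)$ (the $p_j$ determine all edge lengths). A chain cover is a vertex type cover in which the vertices carrying $p_i$ and $p_j$ are adjacent iff $|i-j|=1$. *)

(* Defs.v *)
From HB Require Import structures.
From mathcomp Require Import all_boot all_order all_algebra.
From Stdlib Require Import Relations.
Set Implicit Arguments. Unset Strict Implicit. Unset Printing Implicit Defensive.
Import Order.TTheory GRing.Theory Num.Theory.
Local Open Scope ring_scope.

Definition Hn (n : nat) (x : 'I_n -> int) : Prop :=
  \sum_(i < n) x i = 0 /\ exists i, x i != 0.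

(* A combinatorial type on internal vertex set V: a tree e : rel V (bounded edges)
   and a map l : 'I_n -> V telling at which vertex the leaf i is attached. *)

Definition cut (V : finType) (e : rel V) (v w : V) : rel V :=
  fun a b => e a b && ~~ (((a == v) && (b == w)) || ((a == w) && (b == v))).

Definition is_tree (V : finType) (e : rel V) : Prop :=
  (forall a b, e a b = e b a) /\ (forall a, ~~ e a a) /\
  (forall a b, connect e a b) /\
  #|[set pr : V * V | e pr.1 pr.2]| = (2 * (#|V| - 1))%N.

Definition valence (V : finType) (n : nat) (e : rel V) (l : 'I_n -> V) (v : V) : nat :=
  (#|[set w | e v w]| + #|[set i : 'I_n | l i == v]|)%N.

(* For a bounded edge {v,w}: the sum of x_i over the leaves on the w-side I
   of the split I | I^c induced by the edge.  Its absolute value is the weight,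
   and the edge points from v to w iff this sum is > 0. *)
Definition esum (V : finType) (n : nat) (e : rel V) (l : 'I_n -> V)
  (x : 'I_n -> int) (v w : V) : int :=
  \sum_(i < n | connect (cut e v w) w (l i)) x i.

(* Internal vertices are identified with their labels p_0..p_(n-4), i.e. 'I_(n-3). *)
Definition Cover (n : nat) := (rel 'I_(n - 3) * ('I_n -> 'I_(n - 3)))%type.

Definition vertex_type_cover (n : nat) (x : 'I_n -> int) (C : Cover n) : Prop :=
  let: (e, l) := C in
  is_tree e /\
  (exists v, valence e l v = 4%N /\ forall w, w != v -> valence e l w = 3%N) /\
  (forall v w, e v w -> esum e l x v w != 0 /\
                         (0 < esum e l x v w -> (val v < val w)%N)).

Definition chain_cover (n : nat) (x : 'I_n -> int) (C : Cover n) : Prop :=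
  vertex_type_cover x C /\
  forall v w : 'I_(n - 3), C.1 v w = (((val v).+1 == val w) || ((val w).+1 == val v)).

(* A cell: trivalent n-marked type whose internal vertices are the n-3 labelled
   vertices (Some j, sitting at p_j) plus one free vertex None (at position t). *)
Definition pos (R : realFieldType) (n : nat) (p : 'I_(n - 3) -> R) (t : R)
  (v : option 'I_(n - 3)) : R :=
  if v is Some j then p j else t.

Definition cell_ok (R : realFieldType) (n : nat) (x : 'I_n -> int)
  (p : 'I_(n - 3) -> R) (E : rel (option 'I_(n - 3)))
  (L : 'I_n -> option 'I_(n - 3)) : Prop :=
  is_tree E /\ (forall v, valence E L v = 3%N) /\
  (forall v w, E v w -> esum E L x v w != 0) /\
  exists t : R, forall v w, E v w -> 0 < esum E L x v w -> pos p t v < pos p t w.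

Definition contract (n : nat) (E : rel (option 'I_(n - 3)))
  (L : 'I_n -> option 'I_(n - 3)) (a : 'I_(n - 3)) : Cover n :=
  (fun v w => E (Some v) (Some w) || ((v == a) && E None (Some w) && (w != a))
                                  || ((w == a) && E None (Some v) && (v != a)),
   fun i => odflt a (L i)).

Definition same_cover (n : nat) (C D : Cover n) : Prop :=
  (forall v w, C.1 v w = D.1 v w) /\ (forall i, C.2 i = D.2 i).

Definition H1_edge (R : realFieldType) (n : nat) (x : 'I_n -> int)
  (p : 'I_(n - 3) -> R) (C D : Cover n) : Prop :=
  vertex_type_cover x C /\ vertex_type_cover x D /\
  exists E L (a b : 'I_(n - 3)),
    cell_ok x p E L /\ a != b /\ E None (Some a) /\ E None (Some b) /\
    same_cover (contract E L a) C /\ same_cover (contract E L b) D.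

Definition H1_connected (R : realFieldType) (n : nat) (x : 'I_n -> int)
  (p : 'I_(n - 3) -> R) (C D : Cover n) : Prop :=
  clos_refl_trans (Cover n) (fun C D => same_cover C D \/ H1_edge x p C D) C D.

(* Main.v *)
Require Import Defs.
From HB Require Import structures.
From mathcomp Require Import all_boot all_order all_algebra.
From mathcomp Require Import zify ring.
From Stdlib Require Import Relations FunctionalExtensionality.
Import Order.TTheory GRing.Theory Num.Theory.
Set Implicit Arguments. Unset Strict Implicit. Unset Printing Implicit Defensive.

Section PathRank.
Variable V : finType.
Variable f : V -> nat.
Hypothesis finj : injective f.
Hypothesis fbnd : forall v, f v < #|V|.

Definition pr : rel V := fun a b => ((f a).+1 == f b) || ((f b).+1 == f a).

Lemma fsurj k : k < #|V| -> exists v, f v = k.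
Proof.
move=> hk.
pose g (v : V) : 'I_#|V| := Ordinal (fbnd v).
have ginj : injective g by move=> a b /(congr1 val) /= /finj.
have : (Ordinal hk) \in [set g v | v in V].
  have -> : [set g v | v in V] = setT.
    apply/eqP; rewrite eqEcard subsetT /= cardsT card_ord card_imset //.
  by rewrite inE.
by case/imsetP=> v _ /(congr1 val) /= ->; exists v.
Qed.

Lemma pr_sym a b : pr a b = pr b a.
Proof. by rewrite /pr orbC. Qed.

Lemma pr_irr a : ~~ pr a a.
Proof. rewrite /pr; apply/negP; lia. Qed.

Lemma pr_connect a b : connect pr a b.
Proof.
have key : forall d a b, f b = f a + d -> connect pr a b.
  elim=> [|d IH] a0 b0 h.
    by rewrite addn0 in h; rewrite (finj h) connect0.
  have [c hc] : exists c, f c = f a0 + d.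
    apply: fsurj; have := fbnd b0; lia.
  apply: connect_trans (IH _ _ hc) (connect1 _).
  rewrite /pr; apply/orP; left; apply/eqP; lia.
case: (leqP (f a) (f b)) => h.
  by apply: (key (f b - f a)); lia.
rewrite (sym_connect_sym pr_sym).
by apply: (key (f a - f b)); lia.
Qed.

Lemma cut_connect_up v w u : f w = (f v).+1 ->
  connect (cut pr v w) w u = (f w <= f u).
Proof.
move=> hw; apply/idP/idP.
  case/connectP=> p hp ->.
  have inv : forall p a, f w <= f a -> path (cut pr v w) a p -> f w <= f (last a p).
    elim=> [|b q IH] a //= ha /andP [hab hq]; apply: IH hq.
    move: hab; rewrite /cut /pr => /andP [h1 h2].
    case: (leqP (f w) (f b)) => // hb.
    have ea : f a = f w by case/orP: h1 => /eqP; lia.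
    have eb : f b = f v by case/orP: h1 => /eqP; lia.
    by move: h2; rewrite (finj ea) (finj eb) !eqxx orbT.
  exact: (inv p w (leqnn _) hp).
move=> hu.
have key : forall d u, f u = f w + d -> connect (cut pr v w) w u.
  elim=> [|d IH] u0 h.
    by rewrite addn0 in h; rewrite (finj h) connect0.
  have [c hc] : exists c, f c = f w + d.
    apply: fsurj; have := fbnd u0; lia.
  apply: connect_trans (IH _ hc) (connect1 _).
  rewrite /cut /pr; apply/andP; split; first by apply/orP; left; apply/eqP; lia.
  apply/negP; case/orP=> /andP [/eqP e1 /eqP e2]; subst; lia.
by apply: (key (f u - f w)); lia.
Qed.

Lemma card_rank k : #|[set w | f w == k]| = (k < #|V|).
Proof.
case: ltnP => hk.
  have [v0 hv0] := fsurj hk.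
  have -> : [set w | f w == k] = [set v0].
    apply/setP=> w; rewrite !inE; apply/eqP/eqP => [h|->] //; apply: finj; lia.
  by rewrite cards1.
apply/eqP; rewrite cards_eq0; apply/eqP/setP=> w; rewrite !inE.
apply/negbTE/eqP; have := fbnd w; lia.
Qed.

Lemma deg_pr v : #|[set w | pr v w]| = (0 < f v) + ((f v).+1 < #|V|).
Proof.
have -> : [set w | pr v w] = [set w | f w == (f v).+1] :|: [set w | (f w).+1 == f v].
  by apply/setP=> w; rewrite !inE /pr eq_sym.
rewrite cardsU.
have -> : [set w | f w == (f v).+1] :&: [set w | (f w).+1 == f v] = set0.
  apply/setP=> w; rewrite !inE; apply/negbTE/negP=> /andP [/eqP h1 /eqP h2]; lia.
rewrite cards0 subn0 card_rank addnC; congr (_ + _).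
case: (posnP (f v)) => h.
  rewrite h; apply/eqP; rewrite cards_eq0; apply/eqP/setP=> w; rewrite !inE; by [].
have -> : [set w | (f w).+1 == f v] = [set w | f w == (f v).-1].
  by apply/setP=> w; rewrite !inE; apply/eqP/eqP; lia.
rewrite card_rank; have := fbnd v; lia.
Qed.

End PathRank.

Lemma edge_card (V : finType) (e : rel V) :
  #|[set q : V * V | e q.1 q.2]| = \sum_v #|[set w | e v w]|.
Proof.
rewrite -sum1_card.
have -> : \sum_(q in [set q : V * V | e q.1 q.2]) 1 = \sum_(q : V * V | true && e q.1 q.2) 1.
  by apply: eq_bigl => q; rewrite inE.
rewrite -(pair_big_dep xpredT (fun v w => e v w) (fun _ _ => 1)) /=.
by apply: eq_bigr => v _; rewrite sum1_card; apply: eq_card => w; rewrite inE.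
Qed.

Lemma sum_bool_card (T : finType) (P : pred T) :
  \sum_(v : T) (P v : nat) = #|[set v | P v]|.
Proof.
rewrite -sum1_card [RHS]big_mkcond /=; apply: eq_bigr => v _; by rewrite inE; case: (P v).
Qed.

Section PathRank2.
Variable V : finType.
Variable f : V -> nat.
Hypothesis finj : injective f.
Hypothesis fbnd : forall v, f v < #|V|.

Lemma cut_connect_down v w u : f v = (f w).+1 ->
  connect (cut (pr f) v w) w u = (f u <= f w).
Proof.
move=> hv.
pose g a := #|V| - (f a).+1.
have ginj : injective g.
  by move=> a b; rewrite /g => h; apply: finj; have := fbnd a; have := fbnd b; lia.
have gbnd : forall a, g a < #|V| by move=> a; rewrite /g; have := fbnd a; lia.
have E : cut (pr g) v w =2 cut (pr f) v w.
  move=> a b; rewrite /cut /pr.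
  have -> : ((g a).+1 == g b) = ((f b).+1 == f a).
    by apply/eqP/eqP; rewrite /g; have := fbnd a; have := fbnd b; lia.
  have -> : ((g b).+1 == g a) = ((f a).+1 == f b).
    by apply/eqP/eqP; rewrite /g; have := fbnd a; have := fbnd b; lia.
  by rewrite orbC.
rewrite -(eq_connect E) (cut_connect_up ginj gbnd).
  by rewrite /g; apply/idP/idP; have := fbnd u; have := fbnd w; lia.
by rewrite /g; have := fbnd w; have := fbnd v; lia.
Qed.

Lemma pr_tree : 0 < #|V| -> is_tree (pr f).
Proof.
move=> hN; split; first exact: pr_sym.
split; first exact: pr_irr.
split; first exact: (pr_connect finj fbnd).
rewrite edge_card.
rewrite (eq_bigr (fun v => (0 < f v) + ((f v).+1 < #|V|))); last by move=> v _; apply: deg_pr.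
rewrite big_split /= !sum_bool_card.
have c1 : #|[set v | 0 < f v]| = #|V| - 1.
  have := cardsC [set v | f v == 0]; rewrite (card_rank finj fbnd) //.
  have -> : ~: [set v | f v == 0] = [set v | 0 < f v] by apply/setP=> v; rewrite !inE lt0n.
  lia.
have c2 : #|[set v | (f v).+1 < #|V|]| = #|V| - 1.
  have := cardsC [set v | f v == #|V|.-1]; rewrite (card_rank finj fbnd) ltn_predL (leq_trans _ hN) //.
  have -> : ~: [set v | f v == #|V|.-1] = [set v | (f v).+1 < #|V|].
    by apply/setP=> v; rewrite !inE; apply/idP/idP; have := fbnd v; lia.
  lia.
by rewrite c1 c2 mul2n addnn.
Qed.

End PathRank2.

Local Open Scope ring_scope.

Section Comb.
Variables (n N : nat) (x : 'I_n -> int).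
Hypothesis hx0 : \sum_i x i = 0.
Hypothesis hN : (1 < N)%N.

Definition cnt (l : 'I_n -> 'I_N) (u : 'I_N) : nat := (\sum_i (l i == u : nat))%N.
Definition base (t : 'I_N) : nat := if ((t : nat) == 0%N) || ((t:nat) == N.-1) then 2 else 1.
Definition Ssum (l : 'I_n -> 'I_N) (t : nat) : int := \sum_i (if (t < l i)%N then x i else 0).
Definition prof l (j : 'I_N) := forall t, cnt l t = (base t + (t == j))%N.
Definition posS l := forall t, (t < N.-1)%N -> 0 < Ssum l t.
Definition valid l := exists j, prof l j /\ posS l.
Definition upd (l : 'I_n -> 'I_N) k (t : 'I_N) := fun i => if i == k then t else l i.
Definition step l l' := valid l /\ valid l' /\
  exists k, (forall i, i != k -> l' i = l i) /\ (l' k : nat) = (l k : nat).+1.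
Definition Con := clos_refl_trans _ (fun a b => step a b \/ step b a).

Lemma cnt_ch l l' k u : (forall i, i != k -> l' i = l i) ->
  (cnt l' u + (l k == u) = cnt l u + (l' k == u))%N.
Proof.
move=> h; rewrite /cnt (bigD1 k) //= [X in (_ = X + _)%N](bigD1 k) //=.
rewrite (eq_bigr (fun i => (l i == u : nat))); last by move=> i /h ->.
by rewrite addnAC [RHS]addnAC (addnC (l k == u : nat)).
Qed.

Lemma S_ch l l' k s : (forall i, i != k -> l' i = l i) ->
  Ssum l' s + (if (s < l k)%N then x k else 0) = Ssum l s + (if (s < l' k)%N then x k else 0).
Proof.
move=> h; rewrite /Ssum (bigD1 k) //= [X in (_ = X + _)](bigD1 k) //=.
rewrite (eq_bigr (fun i => if (s < l i)%N then x i else 0)); last by move=> i /h ->.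
by rewrite addrAC [RHS]addrAC (addrC (if _ then _ else _)).

Qed.

Lemma upd_ne l k t i : i != k -> upd l k t i = l i.
Proof. by rewrite /upd => /negbTE ->. Qed.
Lemma upd_k l k t : upd l k t k = t.
Proof. by rewrite /upd eqxx. Qed.

Definition Bs (l : 'I_n -> 'I_N) (j : nat) : int := \sum_i (if l i == j :> nat then x i else 0).

Lemma S_pred l j : (0 < j)%N -> Ssum l j.-1 = Ssum l j + Bs l j.
Proof.
move=> hj; rewrite /Ssum /Bs -big_split /=; apply: eq_bigr => i _.
case: eqP => e; case: (ltnP j.-1 (l i)) => h1; case: (ltnP j (l i)) => h2;
  rewrite ?addr0 ?add0r //; lia.
Qed.

Lemma S_0 l : Ssum l 0 = - Bs l 0.
Proof.
have : Ssum l 0 + Bs l 0 = 0.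
  rewrite -hx0 /Ssum /Bs -big_split; apply: eq_bigr => i _ /=.
  case: eqP => e; case: (ltnP 0 (l i)) => h1; rewrite ?addr0 ?add0r //; exfalso; lia.
move=> h; lia.
Qed.

Lemma S_last l : Ssum l N.-1 = 0.
Proof.
rewrite /Ssum big1 // => i _; have := ltn_ord (l i).
by case: ifP => //; lia.
Qed.

Lemma Bs_split (l : 'I_n -> 'I_N) (j : nat) k : l k = j :> nat ->
  Bs l j = x k + \sum_(i | i != k) (if l i == j :> nat then x i else 0).
Proof. by move=> h; rewrite /Bs (bigD1 k) //= h eqxx. Qed.

Lemma cnt_split l (j : 'I_N) k : l k = j ->
  cnt l j = (\sum_(i | i != k) (l i == j : nat)).+1%N.
Proof. by move=> h; rewrite /cnt (bigD1 k) //= h eqxx. Qed.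

Lemma rest_le l (j : 'I_N) k : (forall i, l i = j -> x i <= x k) ->
  \sum_(i | i != k) (if l i == j :> nat then x i else 0) <= x k *+ (\sum_(i | i != k) (l i == j : nat))%N.
Proof.
move=> h; rewrite -sumrMnr; apply: ler_sum => i _.
case: (l i =P j) => e.
  by rewrite e eqxx mulr1n; apply: h.
have -> : (l i == j :> nat) = false by apply/negbTE/eqP => /val_inj.
by rewrite mulr0n.
Qed.

Lemma rest_ge l (j : 'I_N) k : (forall i, l i = j -> x k <= x i) ->
  x k *+ (\sum_(i | i != k) (l i == j : nat))%N <= \sum_(i | i != k) (if l i == j :> nat then x i else 0).
Proof.
move=> h; rewrite -sumrMnr; apply: ler_sum => i _.
case: (l i =P j) => e.
  by rewrite e eqxx mulr1n; apply: h.
have -> : (l i == j :> nat) = false by apply/negbTE/eqP => /val_inj.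
by rewrite mulr0n.
Qed.

Lemma prof_upd l (j j' : 'I_N) k : prof l j -> l k = j -> j' != j -> prof (upd l k j') j'.
Proof.
move=> hp hk hne t.
have := cnt_ch t (upd_ne l (k:=k) j'); rewrite upd_k hk hp (eq_sym j t) (eq_sym j' t).
move: (cnt _ t) (t == j) (t == j') => c b1 b2; lia.
Qed.

Lemma base_val (t : 'I_N) : base t = (if ((t : nat) == 0%N) || ((t:nat) == N.-1) then 2 else 1)%N.
Proof. by []. Qed.

Lemma mvR_valid l (j j' : 'I_N) k : prof l j -> posS l -> (j' : nat) = (j : nat).+1 -> l k = j ->
  (forall i, l i = j -> x i <= x k) -> prof (upd l k j') j' /\ posS (upd l k j').
Proof.
move=> hp hs hj' hk hmax; split.
  apply: prof_upd => //; apply/eqP => e; move: hj'; rewrite e; lia.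
move=> s hsN.
have := S_ch s (upd_ne l (k:=k) j'); rewrite upd_k hk hj'.
case: (ltngtP s j) => hsj.
- have -> : (s < (j : nat).+1)%N by lia.
  by move=> /addIr ->; apply: hs.
- have -> : (s < (j : nat).+1)%N = false by apply/negbTE; lia.
  by move=> /addIr ->; apply: hs.
rewrite hsj ltnSn addr0 => ->.
have hc := cnt_split hk; rewrite hp eqxx base_val in hc.
have hjN : ((j:nat) < N.-1)%N by have := ltn_ord j'; lia.
have hR := rest_le hmax; rewrite -addn1 in hc.
have hB := Bs_split (congr1 (@nat_of_ord N) hk).
case: (posnP (j : nat)) => hj0.
- rewrite hj0 /= in hc.
  have e2 : (\sum_(i | i != k) (l i == j : nat))%N = 2%N := eq_add_S _ _ (esym hc).
  rewrite e2 in hR.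
  have : (0 < N.-1)%N by lia.
  move=> /hs.
  move=> h0; have e0 := S_0 l; rewrite -hj0 in h0 e0; rewrite e0 hB; rewrite e0 hB in h0; lia.
- have hj1 : ((j:nat) == N.-1) = false by apply/negbTE; lia.
  rewrite hj1 (gtn_eqF hj0) /= in hc.
  have e1 : (\sum_(i | i != k) (l i == j : nat))%N = 1%N := eq_add_S _ _ (esym hc).
  rewrite e1 in hR.
  have h1 := hs _ hjN.
  have h2 := hs (j : nat).-1 (leq_ltn_trans (leq_pred _) hjN).
  rewrite S_pred // hB in h2; lia.
Qed.

Lemma mvL_valid l (j j' : 'I_N) k : prof l j -> posS l -> (j : nat) = (j' : nat).+1 -> l k = j ->
  (forall i, l i = j -> x k <= x i) -> prof (upd l k j') j' /\ posS (upd l k j').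
Proof.
move=> hp hs hj hk hmin; split.
  apply: prof_upd => //; apply/eqP => e; move: hj; rewrite e; lia.
move=> s hsN.
have := S_ch s (upd_ne l (k:=k) j'); rewrite upd_k hk hj.
case: (ltngtP s j') => hsj.
- have -> : (s < (j' : nat).+1)%N by lia.
  by move=> /addIr ->; apply: hs.
- have -> : (s < (j' : nat).+1)%N = false by apply/negbTE; lia.
  by move=> /addIr ->; apply: hs.
rewrite hsj ltnSn addr0 => e.
have hc := cnt_split hk; rewrite hp eqxx base_val in hc.
have hR := rest_ge hmin; rewrite -addn1 in hc.
have hB := Bs_split (congr1 (@nat_of_ord N) hk).
have hj0 : (0 < (j : nat))%N by lia.
have hSp := S_pred l hj0; rewrite hj /= in hSp.
have hjpos : (j' < N.-1)%N by have := ltn_ord j; lia.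
have h1 := hs _ hjpos.
case: (ltngtP (j : nat) N.-1) => hjN.
- have hj1 : ((j : nat) == N.-1) = false by apply/negbTE; lia.
  rewrite hj1 (gtn_eqF hj0) /= in hc.
  have e1 : (\sum_(i | i != k) (l i == j : nat))%N = 1%N := eq_add_S _ _ (esym hc).
  rewrite e1 in hR.
  have h2 := hs (j : nat) hjN.
  rewrite hSp -hj hB in h1; rewrite hSp -hj hB in e; lia.
- by have := ltn_ord j; lia.
- rewrite hjN eqxx orbT /= in hc.
  have e2 : (\sum_(i | i != k) (l i == j : nat))%N = 2%N := eq_add_S _ _ (esym hc).
  rewrite e2 in hR.
  have h0 := S_last l; rewrite -hjN in h0.
  rewrite hSp -hj hB h0 in h1; rewrite hSp -hj hB h0 in e; lia.
Qed.

Definition ltk (a b : 'I_n) := (x a < x b) || ((x a == x b) && (a < b)%N).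

Lemma ltk_irr a : ~~ ltk a a.
Proof. rewrite /ltk; apply/negP; lia. Qed.

Lemma ltk_trans a b c : ltk a b -> ltk b c -> ltk a c.
Proof. rewrite /ltk; lia. Qed.

Lemma ltk_asym a b : ltk a b -> ~~ ltk b a.
Proof. rewrite /ltk => h; apply/negP; lia. Qed.

Lemma ltk_total a b : a != b -> ltk a b || ltk b a.
Proof.
move=> /eqP h; have h' : (a : nat) <> b by move=> /val_inj.
rewrite /ltk; lia.
Qed.

Lemma ltk_le a b : ltk a b -> x a <= x b.
Proof. rewrite /ltk; lia. Qed.

Definition rk (a : 'I_n) : nat := #|[set b | ltk b a]|.

Lemma rk_lt a b : ltk a b -> (rk a < rk b)%N.
Proof.
move=> hab; apply: proper_card; apply/properP; split.
  by apply/subsetP=> c; rewrite !inE => h; apply: ltk_trans h hab.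
by exists a; rewrite !inE ?hab // (negbTE (ltk_irr a)).
Qed.

Lemma exmax (A : {set 'I_n}) k0 : k0 \in A ->
  exists2 k, k \in A & forall i, i \in A -> i != k -> ltk i k.
Proof.
move=> hk0; case: (@arg_maxnP _ k0 (mem A) rk hk0) => k hkA hmax.
exists k => // i hi hne.
case/orP: (ltk_total hne) => // h.
have := hmax i hi; have := rk_lt h; lia.
Qed.

Lemma exmin (A : {set 'I_n}) k0 : k0 \in A ->
  exists2 k, k \in A & forall i, i \in A -> i != k -> ltk k i.
Proof.
move=> hk0; case: (@arg_minnP _ k0 (mem A) rk hk0) => k hkA hmin.
exists k => // i hi hne.
rewrite eq_sym in hne.
case/orP: (ltk_total hne) => // h.
have := hmin i hi; have := rk_lt h; lia.
Qed.

Definition invs (l : 'I_n -> 'I_N) := [set q : 'I_n * 'I_n | ltk q.1 q.2 && (l q.2 < l q.1)%N].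
Definition inv l := #|invs l|.

Lemma invR_sub (l : 'I_n -> 'I_N) k (t : 'I_N) : (t : nat) = (l k).+1 ->
  (forall i, l i = l k -> i != k -> ltk i k) -> invs (upd l k t) \subset invs l.
Proof.
move=> ht hmax; apply/subsetP=> [[a b]]; rewrite !inE /= => /andP [hab hlt].
rewrite hab /=.
case: (a =P k) => [ea|nea]; case: (b =P k) => [eb|neb].
- by subst; rewrite (negbTE (ltk_irr k)) in hab.
- subst a; rewrite upd_k upd_ne in hlt; last by apply/eqP.
  case: (ltngtP (l b) (l k)) => // e; first by rewrite ht in hlt; lia.
  have := hmax b (val_inj e) (introN eqP neb).
  by move/ltk_asym; rewrite hab.
- subst b; rewrite upd_k upd_ne in hlt; last by apply/eqP.
  rewrite ht in hlt; lia.
- have ha : a != k by apply/eqP.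
  have hb : b != k by apply/eqP.
  by rewrite !upd_ne in hlt.
Qed.

Lemma invR_lt (l : 'I_n -> 'I_N) k (t : 'I_N) a : (t : nat) = (l k).+1 ->
  (forall i, l i = l k -> i != k -> ltk i k) -> l a = t -> ltk a k ->
  (inv (upd l k t) < inv l)%N.
Proof.
move=> ht hmax hat hak; apply: proper_card; apply/properP; split; first exact: invR_sub.
have hne : a != k by apply/eqP => e; subst; rewrite (negbTE (ltk_irr k)) in hak.
exists (a, k); rewrite !inE /= hak /= ?hat ?ht //.
by rewrite upd_k upd_ne // hat ltnn.
Qed.

Lemma invL_sub (l : 'I_n -> 'I_N) k (t : 'I_N) : (l k : nat) = t.+1 ->
  (forall i, l i = l k -> i != k -> ltk k i) -> invs (upd l k t) \subset invs l.
Proof.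
move=> ht hmin; apply/subsetP=> [[a b]]; rewrite !inE /= => /andP [hab hlt].
rewrite hab /=.
case: (a =P k) => [ea|nea]; case: (b =P k) => [eb|neb].
- by subst; rewrite (negbTE (ltk_irr k)) in hab.
- subst a; rewrite upd_k upd_ne in hlt; last by apply/eqP.
  rewrite ht; lia.
- subst b; rewrite upd_k upd_ne in hlt; last by apply/eqP.
  case: (ltngtP (l k) (l a)) => // e; first by rewrite ht in e; lia.
  have := hmin a (val_inj (esym e)) (introN eqP nea).
  by move/ltk_asym; rewrite hab.
- have ha : a != k by apply/eqP.
  have hb : b != k by apply/eqP.
  by rewrite !upd_ne in hlt.
Qed.

Lemma invL_lt (l : 'I_n -> 'I_N) k (t : 'I_N) b : (l k : nat) = t.+1 ->
  (forall i, l i = l k -> i != k -> ltk k i) -> l b = t -> ltk k b ->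
  (inv (upd l k t) < inv l)%N.
Proof.
move=> ht hmin hbt hkb; apply: proper_card; apply/properP; split; first exact: invL_sub.
have hne : b != k by apply/eqP => e; subst; rewrite (negbTE (ltk_irr k)) in hkb.
exists (k, b); rewrite !inE /= hkb /= ?hbt ?ht //.
by rewrite upd_k upd_ne // hbt ltnn.
Qed.

Lemma Con_refl l : Con l l.
Proof. exact: rt_refl. Qed.
Lemma Con_trans a b c : Con a b -> Con b c -> Con a c.
Proof. exact: rt_trans. Qed.
Lemma Con_F a b : step a b -> Con a b.
Proof. by move=> h; apply: rt_step; left. Qed.
Lemma Con_B a b : step b a -> Con a b.
Proof. by move=> h; apply: rt_step; right. Qed.
Lemma Con_sym a b : Con a b -> Con b a.
Proof.
elim=> [u v [h|h]| u | u v w _ IH1 _ IH2].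
- exact: Con_B.
- exact: Con_F.
- exact: Con_refl.
- exact: Con_trans IH2 IH1.
Qed.

Lemma blk_ne l u : (0 < cnt l u)%N -> exists c, l c = u.
Proof.
rewrite /cnt; case: (pickP (fun i => l i == u)) => [c /eqP|h]; first by exists c.
by rewrite big1 // => i _; rewrite h.
Qed.

Lemma prof_ne l j u : prof l j -> exists c, l c = u.
Proof. by move=> hp; apply: blk_ne; rewrite hp /base; case: ifP. Qed.

Lemma adj l j : prof l j -> forall a b, ltk a b -> (l b < l a)%N ->
  exists a' b', (l a' : nat) = (l b').+1 /\ ltk a' b'.
Proof.
move=> hp a b hab hlt.
move: {2}(l a - (l b).+1)%N (erefl (l a - (l b).+1)%N) => d hd.
elim: d a b hab hlt hd => [|d IH] a b hab hlt hd.
  by exists a, b; split => //; lia.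
have hlim : ((l b).+1 < N)%N by have := ltn_ord (l a); lia.
have [c hc] := prof_ne (Ordinal hlim) hp.
have hcb : c != b by apply/eqP => e; move: hc; rewrite e => /(congr1 val) /=; lia.
case/orP: (ltk_total hcb) => h.
  by exists c, b; rewrite hc.
apply: (IH a c (ltk_trans hab h)); rewrite hc /=; lia.
Qed.

Lemma block_max l (j : 'I_N) : prof l j ->
  exists2 k, l k = j & forall i, l i = l k -> i != k -> ltk i k.
Proof.
move=> hp; have [c hc] := prof_ne j hp.
have := @exmax [set i | l i == j] c; rewrite inE hc eqxx => /(_ isT) [k].
rewrite inE => /eqP hk hm; exists k => // i hi; apply: hm; by rewrite inE hi hk.
Qed.

Lemma block_min l (j : 'I_N) : prof l j ->
  exists2 k, l k = j & forall i, l i = l k -> i != k -> ltk k i.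
Proof.
move=> hp; have [c hc] := prof_ne j hp.
have := @exmin [set i | l i == j] c; rewrite inE hc eqxx => /(_ isT) [k].
rewrite inE => /eqP hk hm; exists k => // i hi; apply: hm; by rewrite inE hi hk.
Qed.

Lemma moveR l (j : 'I_N) (hj : ((j : nat).+1 < N)%N) : prof l j -> posS l ->
  exists2 k, l k = j & (forall i, l i = l k -> i != k -> ltk i k) /\
   prof (upd l k (Ordinal hj)) (Ordinal hj) /\ posS (upd l k (Ordinal hj)) /\
   step l (upd l k (Ordinal hj)) /\ (inv (upd l k (Ordinal hj)) <= inv l)%N.
Proof.
move=> hp hs; have [k hk hm] := block_max hp.
have hmx : forall i, l i = j -> x i <= x k.
  move=> i hi; case: (i =P k) => [->|ne]; first by [].
  by apply: ltk_le; apply: hm; [rewrite hi hk | apply/eqP].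
have [hp' hs'] := @mvR_valid l j (Ordinal hj) k hp hs (erefl _) hk hmx.
exists k => //; split => //; split => //; split => //; split.
  split; first by exists j.
  split; first by exists (Ordinal hj).
  by exists k; split; [move=> i; apply: upd_ne | rewrite upd_k hk].
apply: subset_leq_card; apply: invR_sub => //; by rewrite hk.
Qed.

Lemma moveL l (j j' : 'I_N) (hj : (j : nat) = (j' : nat).+1) : prof l j -> posS l ->
  exists2 k, l k = j & (forall i, l i = l k -> i != k -> ltk k i) /\
   prof (upd l k j') j' /\ posS (upd l k j') /\
   step (upd l k j') l /\ (inv (upd l k j') <= inv l)%N.
Proof.
move=> hp hs; have [k hk hm] := block_min hp.
have hmn : forall i, l i = j -> x k <= x i.
  move=> i hi; case: (i =P k) => [->|ne]; first by [].
  by apply: ltk_le; apply: hm; [rewrite hi hk | apply/eqP].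
have [hp' hs'] := mvL_valid hp hs hj hk hmn.
exists k => //; split => //; split => //; split => //; split.
  split; first by exists j'.
  split; first by exists j.
  exists k; split; first by move=> i /negbTE; rewrite /upd => ->.
  by rewrite upd_k hk.
apply: subset_leq_card; apply: invL_sub => //; by rewrite hk.
Qed.

Lemma hitR l j a b : prof l j -> posS l -> (l a : nat) = (l b).+1 -> ltk a b -> l b = j ->
  exists l'', valid l'' /\ Con l l'' /\ (inv l'' < inv l)%N.
Proof.
move=> hp hs hab hlt hbj.
have hj : ((j : nat).+1 < N)%N by rewrite -hbj -hab.
have [k hk [hm [hp' [hs' [hst hinv]]]]] := moveR hj hp hs.
exists (upd l k (Ordinal hj)); split; first by exists (Ordinal hj).
split; first exact: Con_F.
apply: (@invR_lt l k (Ordinal hj) a); rewrite ?hk //.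
- by move=> i hi; rewrite -hk in hi; exact: hm.
- by apply: val_inj; rewrite /= hab hbj.
- case: (b =P k) => [<-|ne] //.
  apply: ltk_trans hlt (hm b _ _); [by rewrite hbj hk | exact/eqP].
Qed.

Lemma hitL l (j : 'I_N) a b : prof l j -> posS l -> (l a : nat) = (l b).+1 -> ltk a b -> l a = j ->
  exists l'', valid l'' /\ Con l l'' /\ (inv l'' < inv l)%N.
Proof.
move=> hp hs hab hlt haj.
have hj : (j : nat) = (l b : nat).+1 by rewrite -haj.
have [k hk [hm [hp' [hs' [hst hinv]]]]] := moveL hj hp hs.
exists (upd l k (l b)); split; first by exists (l b).
split; first exact: Con_B.
apply: (@invL_lt l k (l b) b); rewrite ?hk //.
  by move=> i hi; rewrite -hk in hi; exact: hm.
case: (a =P k) => [<-|ne] //.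
apply: ltk_trans (hm a _ _) hlt; [by rewrite haj hk | exact/eqP].
Qed.

Lemma redB d : forall l j a b, prof l j -> posS l -> (l a : nat) = (l b).+1 -> ltk a b ->
  (((l b : nat) - j) + ((j : nat) - (l b).+1) <= d)%N ->
  exists l'', valid l'' /\ Con l l'' /\ (inv l'' < inv l)%N.
Proof.
elim: d => [|d IH] l j a b hp hs hab hlt hd.
  case: (ltngtP j (l b)) => hjb; first by lia.
    have e : l a = j by apply: val_inj => /=; lia.
    exact: hitL hp hs hab hlt e.
  exact: hitR hp hs hab hlt (val_inj (esym hjb)).
case: (ltngtP j (l b)) => hjb.
- have hj : ((j : nat).+1 < N)%N by have := ltn_ord (l b); lia.
  have [k hk [hm [hp' [hs' [hst hinv]]]]] := moveR hj hp hs.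
  have hak : a != k by apply/eqP => e; move: hab; rewrite e hk; lia.
  have hbk : b != k by apply/eqP => e; move: hjb; rewrite e hk; lia.
  have [l'' [hv [hc hi]]] := IH _ _ a b hp' hs' ltac:(by rewrite !upd_ne) hlt
     ltac:(by rewrite upd_ne //=; lia).
  exists l''; split => //; split; first exact: Con_trans (Con_F hst) hc.
  exact: leq_trans hi hinv.
- case: (ltngtP (j : nat) (l b).+1) => hjb1; first by lia.
    have hj' : ((j : nat).-1 < N)%N by have := ltn_ord j; lia.
    have hj : (j : nat) = (Ordinal hj' : nat).+1 by rewrite /=; lia.
    have [k hk [hm [hp' [hs' [hst hinv]]]]] := moveL hj hp hs.
    have hak : a != k by apply/eqP => e; move: hab; rewrite e hk; lia.
    have hbk : b != k by apply/eqP => e; move: hjb; rewrite e hk; lia.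
    have [l'' [hv [hc hi]]] := IH _ _ a b hp' hs' ltac:(by rewrite !upd_ne) hlt
       ltac:(by rewrite upd_ne //=; lia).
    exists l''; split => //; split; first exact: Con_trans (Con_B hst) hc.
    exact: leq_trans hi hinv.
  have e : l a = j by apply: val_inj => /=; lia.
  exact: hitL hp hs hab hlt e.
- exact: hitR hp hs hab hlt (val_inj (esym hjb)).
Qed.

Lemma redA m : forall l, inv l = m -> valid l -> exists l0, valid l0 /\ Con l l0 /\ inv l0 = 0%N.
Proof.
elim/ltn_ind: m => m IH l hm [j [hp hs]].
case: (posnP (inv l)) => h0.
  by exists l; split; [exists j | split; [exact: Con_refl|]].
have [[a b]] : exists q, q \in invs l by apply/set0Pn; rewrite -card_gt0.
rewrite inE /= => /andP [hab hlt].
have [a' [b' [h1 h2]]] := adj hp hab hlt.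
have [l'' [hv [hc hi]]] := @redB _ l j a' b' hp hs h1 h2 (leqnn _).
have [l0 [hv0 [hc0 hi0]]] := IH (inv l'') ltac:(by rewrite -hm) l'' (erefl _) hv.
by exists l0; split => //; split => //; exact: Con_trans hc hc0.
Qed.

Lemma hNl : (N.-1 < N)%N.
Proof. by rewrite ltn_predL ltnW. Qed.
Definition jl : 'I_N := Ordinal hNl.

Lemma toLast d : forall l j, prof l j -> posS l -> inv l = 0%N -> (N.-1 - j <= d)%N ->
  exists l1, prof l1 jl /\ posS l1 /\ inv l1 = 0%N /\ Con l l1.
Proof.
elim: d => [|d IH] l j hp hs hi hd.
  have e : j = jl by apply: val_inj => /=; have := ltn_ord j; lia.
  by subst; exists l; split => //; split => //; split => //; exact: Con_refl.
case: (ltnP (j : nat).+1 N) => hj; last first.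
  have e : j = jl by apply: val_inj => /=; have := ltn_ord j; lia.
  by subst; exists l; split => //; split => //; split => //; exact: Con_refl.
have [k hk [hm [hp' [hs' [hst hinv]]]]] := moveR hj hp hs.
have hi' : inv (upd l k (Ordinal hj)) = 0%N by rewrite hi in hinv; lia.
have [l1 [h1 [h2 [h3 h4]]]] := IH _ _ hp' hs' hi' ltac:(rewrite /=; lia).
by exists l1; split => //; split => //; split => //; exact: Con_trans (Con_F hst) h4.
Qed.

Lemma inv0P l : inv l = 0%N -> forall a b, ltk a b -> (l a <= l b)%N.
Proof.
move=> h a b hab; move/eqP: h; rewrite cards_eq0 => /eqP hE.
have : (a, b) \notin invs l by rewrite hE inE.
by rewrite inE /= hab /= -leqNgt.
Qed.

Definition cum (l : 'I_n -> 'I_N) (u : nat) := #|[set b | (l b <= u)%N]|.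

Lemma cumE l u : cum l u = (\sum_(t : 'I_N | (t <= u)%N) cnt l t)%N.
Proof.
rewrite /cum /cnt exchange_big /= -sum1_card [LHS]big_mkcond /=.
apply: eq_bigr => b _; rewrite inE.
case: (leqP (l b) u) => h.
  rewrite (bigD1 (l b)) //= eqxx big1 // => t /andP [_ ht]; by rewrite eq_sym (negbTE ht).
rewrite big1 // => t ht; case: eqP => // e; rewrite e in h; lia.
Qed.

Lemma cum_eq l1 l2 j u : prof l1 j -> prof l2 j -> cum l1 u = cum l2 u.
Proof. by move=> h1 h2; rewrite !cumE; apply: eq_bigr => t _; rewrite h1 h2. Qed.

Lemma uniq_half l1 l2 j : prof l1 j -> prof l2 j -> inv l1 = 0%N -> inv l2 = 0%N ->
  forall a, (l2 a <= l1 a)%N.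
Proof.
move=> hp1 hp2 hi1 hi2 a; rewrite leqNgt; apply/negP => hlt.
have i1 := inv0P hi1; have i2 := inv0P hi2.
set K := [set b | ltk b a].
have s1 : a |: K \subset [set b | (l1 b <= l1 a)%N].
  apply/subsetP=> b; rewrite !inE => /orP [/eqP ->|h] //; exact: i1.
have s2 : [set b | (l2 b <= l1 a)%N] \subset K.
  apply/subsetP=> b; rewrite !inE => h.
  have hne : b != a by apply/eqP => e; subst; lia.
  case/orP: (ltk_total hne) => // h'.
  have := i2 _ _ h'; lia.
have c1 := subset_leq_card s1; have c2 := subset_leq_card s2.
rewrite cardsU1 inE (negbTE (ltk_irr a)) /= in c1.
have := @cum_eq l1 l2 j (l1 a) hp1 hp2; rewrite /cum => e.
rewrite e in c1; by have := leq_trans c1 c2; rewrite add1n ltnn.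
Qed.

Lemma comb_conn l1 l2 : valid l1 -> valid l2 -> Con l1 l2.
Proof.
move=> v1 v2.
have [m1 [w1 [c1 i1]]] := redA (erefl _) v1.
have [m2 [w2 [c2 i2]]] := redA (erefl _) v2.
case: w1 => [j1 [p1 s1]]; case: w2 => [j2 [p2 s2]].
have [r1 [q1 [t1 [z1 d1]]]] := toLast p1 s1 i1 (leqnn _).
have [r2 [q2 [t2 [z2 d2]]]] := toLast p2 s2 i2 (leqnn _).
have e : r1 = r2.
  apply: functional_extensionality => a; apply: val_inj; apply/eqP; rewrite eqn_leq.
  by rewrite (uniq_half q1 q2 z1 z2) (uniq_half q2 q1 z2 z1).
subst r2.
apply: Con_trans c1 (Con_trans d1 (Con_sym (Con_trans c2 d2))).
Qed.

End Comb.

Section Esum.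
Variables (V : finType) (f : V -> nat).
Hypothesis finj : injective f.
Hypothesis fbnd : forall v, (f v < #|V|)%N.
Variables (n : nat) (l : 'I_n -> V) (x : 'I_n -> int).
Hypothesis hx0 : \sum_i x i = 0.

Lemma esum_up v w : f w = (f v).+1 ->
  esum (pr f) l x v w = \sum_i (if (f w <= f (l i))%N then x i else 0).
Proof.
move=> h; rewrite /esum big_mkcond /=; apply: eq_bigr => i _.
by rewrite (cut_connect_up finj fbnd _ h).
Qed.

Lemma esum_down v w : f v = (f w).+1 ->
  esum (pr f) l x v w = - \sum_i (if (f w < f (l i))%N then x i else 0).
Proof.
move=> h; rewrite /esum big_mkcond /=.
rewrite (eq_bigr (fun i => if (f (l i) <= f w)%N then x i else 0)); last first.
  by move=> i _; rewrite (cut_connect_down finj fbnd _ h).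
have H : \sum_i (if (f (l i) <= f w)%N then x i else 0) +
         \sum_i (if (f w < f (l i))%N then x i else 0) = 0.
  rewrite -big_split -[RHS]hx0; apply: eq_bigr => i _ /=.
  by case: (leqP (f (l i)) (f w)); rewrite ?addr0 ?add0r.
by apply/eqP; rewrite -addr_eq0 H.
Qed.

Lemma valence_pr v : valence (pr f) l v =
  ((0 < f v) + ((f v).+1 < #|V|) + \sum_i (l i == v : nat))%N.
Proof. by rewrite /valence (deg_pr finj fbnd) sum_bool_card. Qed.

End Esum.

Section Chain.
Variables (n : nat) (x : 'I_n -> int).
Hypothesis hn : (5 <= n)%N.
Hypothesis hx0 : \sum_i x i = 0.

Definition fP (v : 'I_(n - 3)) : nat := v.
Lemma fP_inj : injective fP. Proof. exact: val_inj. Qed.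
Lemma fP_bnd v : (fP v < #|'I_(n - 3)|)%N. Proof. by rewrite card_ord /fP. Qed.
Lemma hN3 : (1 < n - 3)%N. Proof. lia. Qed.

Lemma esum_ext (e e' : rel 'I_(n - 3)) l v w : e =2 e' ->
  esum e l x v w = esum e' l x v w.
Proof.
move=> h; rewrite /esum; apply: eq_bigl => i.
apply: eq_connect => a b; by rewrite /cut h.
Qed.

Lemma valence_ext (e e' : rel 'I_(n - 3)) (l : 'I_n -> 'I_(n - 3)) v : e =2 e' ->
  valence e l v = valence e' l v.
Proof. by move=> h; rewrite /valence; congr (_ + _)%N; apply: eq_card => w; rewrite !inE h. Qed.

Lemma valP (l : 'I_n -> 'I_(n - 3)) v : valence (pr fP) l v =
  ((0 < v) + (v.+1 < n - 3) + cnt l v)%N.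
Proof. by rewrite (valence_pr fP_inj fP_bnd l) card_ord. Qed.

Lemma esumP_up (l : 'I_n -> 'I_(n - 3)) (v w : 'I_(n - 3)) : (w : nat) = v.+1 ->
  esum (pr fP) l x v w = Ssum x l v.
Proof.
move=> h; rewrite (esum_up fP_inj fP_bnd l x h) /Ssum; apply: eq_bigr => i _.
by rewrite /fP h.
Qed.

Lemma esumP_down (l : 'I_n -> 'I_(n - 3)) (v w : 'I_(n - 3)) : (v : nat) = w.+1 ->
  esum (pr fP) l x v w = - Ssum x l w.
Proof. by move=> h; rewrite (esum_down fP_inj fP_bnd l hx0 h). Qed.

Lemma base_deg (t : 'I_(n - 3)) : ((0 < t) + (t.+1 < n - 3) + base t = 3)%N.
Proof.
rewrite /base; have := ltn_ord t; have := hN3.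
case: (posnP (t : nat)) => h0; first by rewrite h0 /=; lia.
case: eqP => h1; rewrite /= ?(gtn_eqF h0) /=; lia.
Qed.

Lemma chain_path (C : Cover n) : chain_cover x C -> C.1 =2 pr fP.
Proof. rewrite /chain_cover => -[_ h] v w; by rewrite h. Qed.

Lemma chain_valid (C : Cover n) : chain_cover x C -> valid x C.2.
Proof.
move=> hC; have hE := chain_path hC.
case: C hC hE => e l /= [[_ [[v [hv4 hv3]] hes]] _] hE.
exists v; split.
  move=> t; have := base_deg t.
  case: (t =P v) => [->|ne].
    move=> hb /=; move: hv4; rewrite (valence_ext _ _ hE) valP; lia.
  move=> hb /=; have := hv3 t (introN eqP ne); rewrite (valence_ext _ _ hE) valP.
  lia.
move=> t ht.
have h1 : (t < n - 3)%N by lia.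
have h2 : (t.+1 < n - 3)%N by lia.
have := hes (Ordinal h2) (Ordinal h1).
rewrite hE /pr /fP /= eqxx orbT => /(_ isT) [].
rewrite (esum_ext _ _ _ hE) (@esumP_down l (Ordinal h2) (Ordinal h1)) //=.
move=> hne hlt; have : ~ (0 < - Ssum x l t) by move=> /hlt; lia.
lia.
Qed.

Lemma vtc_valid (l : 'I_n -> 'I_(n - 3)) : valid x l -> vertex_type_cover x (pr fP, l).
Proof.
case=> j [hp hs]; split.
  apply: (pr_tree fP_inj fP_bnd); rewrite card_ord; lia.
split.
  exists j; split.
    rewrite valP; have := base_deg j; rewrite hp eqxx /=; lia.
  move=> w hw; rewrite valP; have := base_deg w; rewrite hp (negbTE hw) /=; lia.
move=> v w; rewrite /pr /fP => /orP [/eqP h|/eqP h].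
  rewrite esumP_up //; have := hs v; have := ltn_ord w.
  move=> hw /(_ ltac:(lia)) hpos; split; first by lia.
  by move=> _; change (nat_of_ord v < nat_of_ord w)%N; lia.
rewrite esumP_down //; have := hs w; have := ltn_ord v.
move=> hv /(_ ltac:(lia)) hpos; split; first by lia.
move=> hh; lia.
Qed.

End Chain.

Section Cell.
Variables (n : nat) (x : 'I_n -> int).
Hypothesis hn : (5 <= n)%N.
Hypothesis hx0 : \sum_i x i = 0.
Variables (R : realFieldType) (p : 'I_(n - 3) -> R).
Hypothesis hp : forall i j : 'I_(n - 3), (val i < val j)%N -> p i < p j.
Variables (l l' : 'I_n -> 'I_(n - 3)) (k : 'I_n).
Hypothesis hk : forall i, i != k -> l' i = l i.
Hypothesis hjj : (l' k : nat) = (l k).+1.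
Hypothesis hpl : prof l (l k).
Hypothesis hsl : posS x l.
Hypothesis hpl' : prof l' (l' k).
Hypothesis hsl' : posS x l'.

Definition fC (v : option 'I_(n - 3)) : nat :=
  if v is Some i then (i + (l k < i))%N else (l k).+1.

Lemma fC_inj : injective fC.
Proof.
move=> [a|] [b|] /=; rewrite /fC.
- move=> h; congr Some; apply: val_inj => /=; move: h.
  by case: (ltnP (l k) a); case: (ltnP (l k) b); lia.
- by case: (ltnP (l k) a); lia.
- by case: (ltnP (l k) b); lia.
- by [].
Qed.

Lemma fC_bnd v : (fC v < #|{: option 'I_(n - 3)}|)%N.
Proof.
rewrite card_option card_ord /fC; case: v => [a|] /=.
  by have := ltn_ord a; case: (ltnP (l k) a); lia.
by have := ltn_ord (l' k); lia.
Qed.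

Definition Lc (i : 'I_n) : option 'I_(n - 3) := if i == k then None else Some (l i).

Lemma Tpos r : (0 < r)%N -> (r <= n - 3)%N ->
  0 < \sum_i (if (r <= fC (Lc i))%N then x i else 0).
Proof.
move=> h0 hr.
have hjN : ((l k : nat).+1 < n - 3)%N by rewrite -hjj.
have hlk : forall i, i != k -> fC (Lc i) = (l i + (l k < l i))%N.
  by move=> i hi; rewrite /Lc (negbTE hi).
have hkk : fC (Lc k) = (l k).+1 by rewrite /Lc eqxx.
case: (ltnP (l k) r) => h1; last first.
  have -> : \sum_i (if (r <= fC (Lc i))%N then x i else 0) = Ssum x l r.-1.
    apply: eq_bigr => i _; case: (i =P k) => [->|ne].
      rewrite hkk; have -> : (r <= (l k).+1)%N by lia.
      by have -> : (r.-1 < l k)%N by lia.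
    rewrite hlk; last by apply/eqP.
    by case: (ltnP (l k) (l i)) => h2; case: (ltnP r.-1 (l i)) => h3;
      case: (leqP r (l i + _)) => h4 //; lia.
  apply: hsl; lia.
case: (ltngtP r (l k).+1) => h2; first by lia.
  have -> : \sum_i (if (r <= fC (Lc i))%N then x i else 0) = Ssum x l (r - 2).
    apply: eq_bigr => i _; case: (i =P k) => [->|ne].
      rewrite hkk; have -> : (r <= (l k).+1)%N = false by apply/negbTE; lia.
      by have -> : (r - 2 < l k)%N = false by apply/negbTE; lia.
    rewrite hlk; last by apply/eqP.
    by case: (ltnP (l k) (l i)) => h3; case: (ltnP (r - 2) (l i)) => h5;
      case: (leqP r (l i + _)) => h4 //; lia.
  apply: hsl; lia.
have -> : \sum_i (if (r <= fC (Lc i))%N then x i else 0) = Ssum x l' (l k).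
  apply: eq_bigr => i _; case: (i =P k) => [->|ne].
    by rewrite hkk h2 leqnn hjj ltnSn.
  rewrite hlk; last by apply/eqP.
  rewrite hk; last by apply/eqP.
  by case: (ltnP (l k) (l i)) => h3; case: (leqP r (l i + _)) => h4 //; lia.
apply: hsl'; lia.
Qed.

Lemma hjN : ((l k : nat).+1 < n - 3)%N.
Proof. by rewrite -hjj. Qed.

Lemma cell_tree : is_tree (pr fC).
Proof. by apply: (pr_tree fC_inj fC_bnd); rewrite card_option. Qed.

Lemma cell_val v : valence (pr fC) Lc v = 3%N.
Proof.
rewrite (valence_pr fC_inj fC_bnd) card_option card_ord.
have hN := hjN.
case: v => [u|] /=.
  have hc : (\sum_i (Lc i == Some u : nat) + (l k == u) = cnt l u)%N.
    rewrite /cnt [X in (_ = X)%N](bigD1 k) //= (bigD1 k) //= /Lc eqxx /= add0n addnC.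
    congr (_ + _)%N; apply: eq_bigr => i /negbTE ->; by [].
  have hb := base_deg hn hx0 u; rewrite hpl in hc.
  have hu := ltn_ord u.
  case: (u =P l k) => [e|ne].
    rewrite e eqxx /= in hc hb *; rewrite ltnn addn0 ltnS ltn_ord; rewrite hN /= in hb; rewrite /=; move: (\sum_(i < n) _)%N (base _) (0 < l k)%N hc hb => S B b0 hc hb; lia.
  have hne : (l k == u) = false by apply/eqP => e; apply: ne.
  have hne2 : (u == l k) = false by apply/eqP.
  rewrite hne hne2 /= in hc.
  have hne' : (u : nat) <> l k by move=> /val_inj.
  case: (ltnP (l k) u) => h /=.
    have e1 : (0 < u + 1)%N = true by lia.
    have e2 : (0 < u)%N = true by lia.
    rewrite e1 addn1 ltnS; rewrite e2 in hb.
    rewrite /= in hb hc *; move: (\sum_(i < n) _)%N (base _) (u.+1 < n - 3)%N hc hb => S B b0 hc hb; lia.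
  have e2 : ((u + 0).+1 < (n - 3).+1)%N = true by lia.
  have e3 : (u.+1 < n - 3)%N = true by lia.
  rewrite e2 addn0; rewrite e3 in hb.
  rewrite /= in hb hc *; move: (\sum_(i < n) _)%N (base _) (0 < u)%N hc hb => S B b0 hc hb; lia.
have -> : (\sum_i (Lc i == None : nat))%N = 1%N.
  rewrite (bigD1 k) //= /Lc eqxx big1 // => i /negbTE ->; by [].
lia.
Qed.

Lemma esum_cell v w : pr fC v w ->
  (fC w = (fC v).+1 /\ 0 < esum (pr fC) Lc x v w) \/ (fC v = (fC w).+1 /\ esum (pr fC) Lc x v w < 0).
Proof.
have hb := fC_bnd; rewrite card_option card_ord in hb.
rewrite {1}/pr => /orP [/eqP h|/eqP h].
  left; split => //; rewrite (esum_up fC_inj fC_bnd Lc x (esym h)).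
  apply: Tpos; have := hb w; lia.
right; split => //; rewrite (esum_down fC_inj fC_bnd Lc hx0 (esym h)).
rewrite oppr_lt0; apply: Tpos => //; have := hb v; lia.
Qed.

Lemma ple (a b : 'I_(n - 3)) : (a <= b)%N -> p a <= p b.
Proof.
rewrite leq_eqVlt => /orP [/eqP e|h]; first by rewrite (val_inj e).
exact/ltW/hp.
Qed.

Lemma cell_orient : exists t : R, forall v w, pr fC v w -> 0 < esum (pr fC) Lc x v w ->
  pos p t v < pos p t w.
Proof.
have hlt : p (l k) < p (l' k) by apply: hp; rewrite /= hjj.
have [m1 m2] := midf_lt hlt.
exists ((p (l k) + p (l' k)) / 2) => v w hvw hpos.
have hf : (fC v < fC w)%N.
  case: (esum_cell hvw) => [[h _]|[_ h]]; first by rewrite h.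
  by move: hpos; rewrite ltNge (ltW h).
case: v w hvw hpos hf => [a|] [b|] _ _ /=; rewrite /fC.
- move=> h; apply: hp; rewrite /=; move: h; case: (ltnP (l k) a); case: (ltnP (l k) b); lia.
- move=> h; apply: le_lt_trans m1; apply: ple; move: h; case: (ltnP (l k) a); lia.
- move=> h; apply: lt_le_trans m2 _; apply: ple; rewrite hjj; move: h; case: (ltnP (l k) b); lia.
- by rewrite ltnn.
Qed.

Lemma cell_okC : cell_ok x p (pr fC) Lc.
Proof.
split; first exact: cell_tree.
split; first exact: cell_val.
split; last exact: cell_orient.
move=> v w h; case: (esum_cell h) => [[_ e]|[_ e]]; [exact: lt0r_neq0 | exact: ltr0_neq0].
Qed.

Lemma contract_j : same_cover (contract (pr fC) Lc (l k)) (pr (@fP n), l).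
Proof.
split; last by move=> i; rewrite /contract /Lc /=; case: eqP => [->|].
move=> v w; rewrite /contract /pr /fC /fP /= -!val_eqE /=.
have := hjN; have := ltn_ord v; have := ltn_ord w.
case: (ltnP (l k) v); case: (ltnP (l k) w) => /= h1 h2 h3 h4 h5; apply/idP/idP; lia.
Qed.

Lemma contract_j' : same_cover (contract (pr fC) Lc (l' k)) (pr (@fP n), l').
Proof.
split.
  move=> v w; rewrite /contract /pr /fC /fP /= -!val_eqE /= hjj.
  have := hjN; have := ltn_ord v; have := ltn_ord w.
  case: (ltnP (l k) v); case: (ltnP (l k) w) => /= h1 h2 h3 h4 h5; apply/idP/idP; lia.
move=> i; rewrite /contract /Lc /=; case: (i =P k) => [->|/eqP ne] //.
by rewrite /= hk.
Qed.

Lemma cell_edges (hv : valid x l) (hv' : valid x l') :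
  H1_edge x p (pr (@fP n), l) (pr (@fP n), l') /\ H1_edge x p (pr (@fP n), l') (pr (@fP n), l).
Proof.
have c1 := vtc_valid hn hx0 hv; have c2 := vtc_valid hn hx0 hv'.
have hne : l k != l' k by apply/eqP => e; move: hjj; rewrite e; lia.
have e1 : pr fC None (Some (l k)).
  by rewrite /pr /fC /= ltnn addn0; apply/orP; right.
have e2 : pr fC None (Some (l' k)).
  by rewrite /pr /fC /= hjj ltnSn addn1; apply/orP; left.
split; (split; [done | split; [done|]]).
  exists (pr fC), Lc, (l k), (l' k); split; first exact: cell_okC.
  by split => //; split => //; split => //; split; [exact: contract_j | exact: contract_j'].
exists (pr fC), Lc, (l' k), (l k); split; first exact: cell_okC.
split; first by rewrite eq_sym.
by split => //; split => //; split; [exact: contract_j' | exact: contract_j].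
Qed.

End Cell.

Section Final.
Variables (n : nat) (x : 'I_n -> int).
Hypothesis hn : (5 <= n)%N.
Hypothesis hx0 : \sum_i x i = 0.
Variables (R : realFieldType) (p : 'I_(n - 3) -> R).
Hypothesis hp : forall i j : 'I_(n - 3), (val i < val j)%N -> p i < p j.

Lemma step_info (a b : 'I_n -> 'I_(n - 3)) : step x a b ->
  exists k, [/\ forall i, i != k -> b i = a i, (b k : nat) = (a k).+1,
    prof a (a k), prof b (b k) & posS x a /\ posS x b].
Proof.
case=> [[ja [pa sa]] [[jb [pb sb]] [k [hk hkk]]]].
exists k.
have h1 := cnt_ch (a k) hk; have h2 := cnt_ch (b k) hk.
rewrite pa pb eqxx in h1; rewrite pa pb eqxx in h2.
have ne : (b k == a k) = false by apply/eqP => e; move: hkk; rewrite e; lia.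
have ne' : (a k == b k) = false by rewrite eq_sym.
rewrite ne in h1; rewrite ne' in h2.
have eja : ja = a k.
  case: (a k =P ja) => [//|ne1]; move: h1; rewrite (introF eqP ne1).
  move: (a k == jb) (base (a k)) => c B; case: c => /=; lia.
have ejb : jb = b k.
  case: (b k =P jb) => [//|ne1]; move: h2; rewrite (introF eqP ne1).
  move: (b k == ja) (base (b k)) => c B; case: c => /=; lia.
by subst; split.
Qed.

Lemma con_H1 (l1 l2 : 'I_n -> 'I_(n - 3)) : Con x l1 l2 ->
  H1_connected x p (pr (@fP n), l1) (pr (@fP n), l2).
Proof.
elim=> [a b [h|h]|a|a b c _ IH1 _ IH2].
- have [k [hk hkk pa pb [sa sb]]] := step_info h.
  case: h => va [vb _].
  apply: rt_step; right.
  exact: (cell_edges hn hx0 hp hk hkk pa sa sb va vb).1.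
- have [k [hk hkk pa pb [sa sb]]] := step_info h.
  case: h => va [vb _].
  apply: rt_step; right.
  exact: (cell_edges hn hx0 hp hk hkk pa sa sb va vb).2.
- exact: rt_refl.
- exact: rt_trans IH1 IH2.
Qed.

End Final.

Theorem lemma3p5 (R : realFieldType) (n : nat) (hn : (5 <= n)%N)
  (x : 'I_n -> int) (hx : Hn x)
  (p : 'I_(n - 3) -> R) (hp : forall i j : 'I_(n - 3), (val i < val j)%N -> p i < p j)
  (C D : Cover n) (hC : chain_cover x C) (hD : chain_cover x D) :
  H1_connected x p C D.
Proof.
have hx0 := hx.1.
have vC := chain_valid hn hx0 hC; have vD := chain_valid hn hx0 hD.
have hN : (1 < n - 3)%N by lia.
have hcon := comb_conn hx0 hN vC vD.
have eC := chain_path hC; have eD := chain_path hD.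
apply: (@rt_trans _ _ _ (pr (@fP n), C.2)).
  by apply: rt_step; left; split => // v w; rewrite eC.
apply: (@rt_trans _ _ _ (pr (@fP n), D.2)); first exact: (con_H1 hn hx0 hp hcon).
by apply: rt_step; left; split => // v w; rewrite eD.
Qed.
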